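(* For every $r\ge0$, the tuple $(q_{r,n}1_n)_{n\ge0}$ is an element of the center $Z(\mathcal{NB}_t)$, i.e. $q_{r,m}1_m\circ f=f\circ q_{r,n}1_n$ for all $m,n\ge0$ and all $f\in\mathrm{Hom}_{\mathcal{NB}_t}(B^{\star n},B^{\star m})$.
   Context: Let $\Bbbk$ be a field of characteristic $\neq2$, $t\in\{0,1\}$, and let $\mathcal{NB}_t$ be the nil-Brauer category: the strict graded $\Bbbk$-linear monoidal category (tensor $\star$, unit $\mathbb1$, composition $\circ$) generated by an object $B$ and morphisms $x:B\to B$ (degree 2), $\tau:B\star B\to B\star B$ (degree $-2$), $\cap:B\star B\to\mathbb1$, $\cup:\mathbb1\to B\star B$ (degree 0), with relations ($1=1_B$): $\tau\circ\tau=0$; $(\tau\star1)\circ(1\star\tau)\circ(\tau\star1)=(1\star\tau)\circ(\tau\star1)\circ(1\star\tau)$; $\cap\circ\cup=t1_{\mathbb1}$; $(\cap\star1)\circ(1\star\cup)=1=(1\star\cap)\circ(\cup\star1)$; $\cap\circ\tau=0$; $(1\star\cap)\circ(\tau\star1)=(\cap\star1)\circ(1\star\tau)$; $(x\star1)\circ\tau-\tau\circ(1\star x)=1\star1-\cup\circ\cap$; $\cap\circ(1\star x)=-\cap\circ(x\star1)$. For a polynomial $g\in\Bbbk[x_1,\dots,x_n]$, $g1_n$ denotes the endomorphism of $B^{\star n}$ obtained by substituting $x_i\mapsto 1^{\star(i-1)}\star x\star1^{\star(n-i)}$ (these commute). The symmetric polynomials $q_{r,n}\in\Bbbk[x_1,\dots,x_n]^{S_n}$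 are defined by $\sum_{r\ge0}u^{-r}q_{r,n}=\prod_{i=1}^n\frac{u+x_i}{u-x_i}\in\Bbbk[x_1,\dots,x_n][\![u^{-1}]\!]$. The center of a category is the algebra of endomorphisms of its identity functor. *)

(* Defs.v *)
From HB Require Import structures.
From mathcomp Require Import all_boot all_order all_algebra.
From mathcomp Require Import mpoly.
Set Implicit Arguments. Unset Strict Implicit. Unset Printing Implicit Defensive.
Import GRing.Theory.
Local Open Scope ring_scope.

(* The nil-Brauer category NB_t, presented by generators and relations *)
(* as a strict K-linear monoidal category.  Objects are B^{*n}, n:nat  *)
(* (B^{*0} = 1).  Morphism expressions are untyped terms; [wt f n m]   *)
(* says f : B^{*n} -> B^{*m}; [nb_eq t n m f g] is the smallest        *)
(* congruence on well-typed terms n -> m containing the axioms of a    *)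
(* strict K-linear monoidal category and the defining relations.       *)
(* Hom(B^{*n},B^{*m}) = well-typed terms n -> m modulo nb_eq t n m.    *)

Section NB.
Variable K : fieldType.

Inductive nbtm : Type :=
| Id   of nat
| Gx
| Gtau
| Gcap
| Gcup
| Comp of nbtm & nbtm      (* Comp f g = f o g *)
| Tens of nbtm & nbtm
| Zero of nat & nat
| Add  of nbtm & nbtm
| Scal of K & nbtm.

Inductive wt : nbtm -> nat -> nat -> Prop :=
| wt_id n : wt (Id n) n n
| wt_x : wt Gx 1 1
| wt_tau : wt Gtau 2 2
| wt_cap : wt Gcap 2 0
| wt_cup : wt Gcup 0 2
| wt_comp f g n m p : wt g n m -> wt f m p -> wt (Comp f g) n p
| wt_tens f g n1 m1 n2 m2 n m :
    wt f n1 m1 -> wt g n2 m2 -> n = (n1 + n2)%N -> m = (m1 + m2)%N ->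
    wt (Tens f g) n m
| wt_zero n m : wt (Zero n m) n m
| wt_add f g n m : wt f n m -> wt g n m -> wt (Add f g) n m
| wt_scal c f n m : wt f n m -> wt (Scal c f) n m.

Definition tparam (t : bool) : K := if t then 1 else 0.

Definition Sub (f g : nbtm) := Add f (Scal (-1) g).

Inductive nb_eq (t : bool) : nat -> nat -> nbtm -> nbtm -> Prop :=
| eq_refl f n m : wt f n m -> nb_eq t n m f f
| eq_sym f g n m : nb_eq t n m f g -> nb_eq t n m g f
| eq_trans f g h n m : nb_eq t n m f g -> nb_eq t n m g h -> nb_eq t n m f h
| eq_comp f f' g g' n m p :
    nb_eq t m p f f' -> nb_eq t n m g g' -> nb_eq t n p (Comp f g) (Comp f' g')
| eq_tens f f' g g' n1 m1 n2 m2 :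
    nb_eq t n1 m1 f f' -> nb_eq t n2 m2 g g' ->
    nb_eq t (n1 + n2) (m1 + m2) (Tens f g) (Tens f' g')
| eq_add f f' g g' n m :
    nb_eq t n m f f' -> nb_eq t n m g g' -> nb_eq t n m (Add f g) (Add f' g')
| eq_scal c f f' n m : nb_eq t n m f f' -> nb_eq t n m (Scal c f) (Scal c f')
| eq_addA f g h n m : wt f n m -> wt g n m -> wt h n m ->
    nb_eq t n m (Add f (Add g h)) (Add (Add f g) h)
| eq_addC f g n m : wt f n m -> wt g n m -> nb_eq t n m (Add f g) (Add g f)
| eq_add0 f n m : wt f n m -> nb_eq t n m (Add f (Zero n m)) f
| eq_addN f n m : wt f n m -> nb_eq t n m (Add f (Scal (-1) f)) (Zero n m)
| eq_scal1 f n m : wt f n m -> nb_eq t n m (Scal 1 f) f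
| eq_scalA a b f n m : wt f n m -> nb_eq t n m (Scal a (Scal b f)) (Scal (a * b) f)
| eq_scalDr a f g n m : wt f n m -> wt g n m ->
    nb_eq t n m (Scal a (Add f g)) (Add (Scal a f) (Scal a g))
| eq_scalDl a b f n m : wt f n m ->
    nb_eq t n m (Scal (a + b) f) (Add (Scal a f) (Scal b f))
| eq_compA f g h n m p q : wt h n m -> wt g m p -> wt f p q ->
    nb_eq t n q (Comp f (Comp g h)) (Comp (Comp f g) h)
| eq_id_comp f n m : wt f n m -> nb_eq t n m (Comp (Id m) f) f
| eq_comp_id f n m : wt f n m -> nb_eq t n m (Comp f (Id n)) f
| eq_compDl f g h n m p : wt h n m -> wt f m p -> wt g m p ->
    nb_eq t n p (Comp (Add f g) h) (Add (Comp f h) (Comp g h))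
| eq_compDr f g h n m p : wt g n m -> wt h n m -> wt f m p ->
    nb_eq t n p (Comp f (Add g h)) (Add (Comp f g) (Comp f h))
| eq_compZl c f g n m p : wt g n m -> wt f m p ->
    nb_eq t n p (Comp (Scal c f) g) (Scal c (Comp f g))
| eq_compZr c f g n m p : wt g n m -> wt f m p ->
    nb_eq t n p (Comp f (Scal c g)) (Scal c (Comp f g))
| eq_tensA f g h n m : wt (Tens f (Tens g h)) n m ->
    nb_eq t n m (Tens f (Tens g h)) (Tens (Tens f g) h)
| eq_tens_unitl f n m : wt f n m -> nb_eq t n m (Tens (Id 0) f) f
| eq_tens_unitr f n m : wt f n m -> nb_eq t n m (Tens f (Id 0)) f
| eq_tens_id a b : nb_eq t (a + b) (a + b) (Tens (Id a) (Id b)) (Id (a + b))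
| eq_interchange f f' g g' n1 m1 p1 n2 m2 p2 :
    wt f' n1 m1 -> wt f m1 p1 -> wt g' n2 m2 -> wt g m2 p2 ->
    nb_eq t (n1 + n2) (p1 + p2)
      (Tens (Comp f f') (Comp g g')) (Comp (Tens f g) (Tens f' g'))
| eq_tensDl f g h n m : wt (Tens (Add f g) h) n m ->
    nb_eq t n m (Tens (Add f g) h) (Add (Tens f h) (Tens g h))
| eq_tensDr f g h n m : wt (Tens f (Add g h)) n m ->
    nb_eq t n m (Tens f (Add g h)) (Add (Tens f g) (Tens f h))
| eq_tensZl c f g n m : wt (Tens f g) n m ->
    nb_eq t n m (Tens (Scal c f) g) (Scal c (Tens f g))
| eq_tensZr c f g n m : wt (Tens f g) n m ->
    nb_eq t n m (Tens f (Scal c g)) (Scal c (Tens f g))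
| rel_tau2 : nb_eq t 2 2 (Comp Gtau Gtau) (Zero 2 2)
| rel_braid :
    nb_eq t 3 3
      (Comp (Tens Gtau (Id 1)) (Comp (Tens (Id 1) Gtau) (Tens Gtau (Id 1))))
      (Comp (Tens (Id 1) Gtau) (Comp (Tens Gtau (Id 1)) (Tens (Id 1) Gtau)))
| rel_bubble : nb_eq t 0 0 (Comp Gcap Gcup) (Scal (tparam t) (Id 0))
| rel_zigzag1 : nb_eq t 1 1 (Comp (Tens Gcap (Id 1)) (Tens (Id 1) Gcup)) (Id 1)
| rel_zigzag2 : nb_eq t 1 1 (Comp (Tens (Id 1) Gcap) (Tens Gcup (Id 1))) (Id 1)
| rel_cap_tau : nb_eq t 2 0 (Comp Gcap Gtau) (Zero 2 0)
| rel_pitchfork :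
    nb_eq t 3 1 (Comp (Tens (Id 1) Gcap) (Tens Gtau (Id 1)))
                (Comp (Tens Gcap (Id 1)) (Tens (Id 1) Gtau))
| rel_dot_slide :
    nb_eq t 2 2 (Sub (Comp (Tens Gx (Id 1)) Gtau) (Comp Gtau (Tens (Id 1) Gx)))
                (Sub (Tens (Id 1) (Id 1)) (Comp Gcup Gcap))
| rel_cap_dot :
    nb_eq t 2 0 (Comp Gcap (Tens (Id 1) Gx)) (Scal (-1) (Comp Gcap (Tens Gx (Id 1)))).

(* g 1_n for g in K[x_1..x_n]: x_i |-> 1^{*(i-1)} * x * 1^{*(n-i)}      *)
(* (indices here are 0-based: i : 'I_n).                               *)

Definition xi_tm (n : nat) (i : 'I_n) : nbtm :=
  Tens (Id i) (Tens Gx (Id (n - i.+1))).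

Definition xpow_tm (n : nat) (i : 'I_n) (k : nat) : nbtm :=
  iter k (Comp (xi_tm i)) (Id n).

Definition mono_tm (n : nat) (mu : 'X_{1..n}) : nbtm :=
  foldr Comp (Id n) [seq xpow_tm i (mu i) | i <- enum 'I_n].

Definition poly_tm (n : nat) (g : {mpoly K[n]}) : nbtm :=
  foldr Add (Zero n n) [seq Scal (g@_mu) (mono_tm mu) | mu <- msupp g].

(* q_{r,n}: sum_r u^{-r} q_{r,n} = prod_i (u+x_i)/(u-x_i), expanded in *)
(* z = u^{-1}:  (u+x)/(u-x) = (1 + x z) * (1 - x z)^{-1}.  Formal power *)
(* series in z are coefficient sequences nat -> A.                     *)

Definition ser_mul (A : ringType) (a b : nat -> A) : nat -> A :=
  fun k => \sum_(j < k.+1) a j * b (k - j)%N.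

Definition ser_one (A : ringType) : nat -> A := fun k => (k == 0%N)%:R.

Definition ser_lin (A : ringType) (x : A) : nat -> A :=
  fun k => if k == 0%N then 1 else if k == 1%N then x else 0.

Definition ser_geom (A : ringType) (x : A) : nat -> A := fun k => x ^+ k.

Definition gen_q (n : nat) : nat -> {mpoly K[n]} :=
  \big[@ser_mul _/@ser_one _]_(i < n)
     ser_mul (ser_lin 'X_i) (ser_geom 'X_i).

Definition q_poly (r n : nat) : {mpoly K[n]} := gen_q n r.

End NB.

(* Main.v *)
Require Import Defs.
From HB Require Import structures.
From mathcomp Require Import all_boot all_order all_algebra.
From mathcomp Require Import mpoly.
From mathcomp Require Import boolp zify ring.
From mathcomp Require Import ssrcomplements.
Import GRing.Theory.
Set Implicit Arguments. Unset Strict Implicit. Unset Printing Implicit Defensive.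


Section Quot.
Variable K : fieldType.
Variable t : bool.
Local Notation tm := (nbtm K).
Local Notation Id := (Id K).
Local Notation Gx := (Gx K).
Local Notation Gtau := (Gtau K).
Local Notation Gcap := (Gcap K).
Local Notation Gcup := (Gcup K).
Local Notation Zero := (Zero K).
Local Notation E := (nb_eq t).
Implicit Types f g h u v : tm.

Lemma wt_Comp_inv f g n p : wt (Comp f g) n p -> exists m, wt g n m /\ wt f m p.
Proof. by inversion 1; subst; eauto. Qed.
Lemma wt_Tens_inv f g n m : wt (Tens f g) n m ->
  exists n1 m1 n2 m2, [/\ wt f n1 m1, wt g n2 m2, n = (n1 + n2)%N & m = (m1 + m2)%N].
Proof. by inversion 1; subst; do 4 eexists; split; eauto. Qed.
Lemma wt_Add_inv f g n m : wt (Add f g) n m -> wt f n m /\ wt g n m.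
Proof. by inversion 1; subst; eauto. Qed.
Lemma wt_Scal_inv c f n m : wt (Scal c f) n m -> wt f n m.
Proof. by inversion 1; subst; eauto. Qed.
Lemma wt_Id_inv k n m : wt (Id k) n m -> n = k /\ m = k.
Proof. by inversion 1. Qed.
Lemma wt_Zero_inv k l n m : wt (Zero k l) n m -> n = k /\ m = l.
Proof. by inversion 1. Qed.

Lemma wt_uniq f n m n' m' : wt f n m -> wt f n' m' -> n = n' /\ m = m'.
Proof.
move=> H; elim: H n' m' => {f n m}.
- by move=> n n' m' /wt_Id_inv [-> ->].
- by move=> n' m' H; inversion H.
- by move=> n' m' H; inversion H.
- by move=> n' m' H; inversion H.
- by move=> n' m' H; inversion H.
- move=> f g n m p _ IHg _ IHf n' m' /wt_Comp_inv [m0 [W1 W2]].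
  have [-> e] := IHg _ _ W1; subst; have [_ ->] := IHf _ _ W2; done.
- move=> f g n1 m1 n2 m2 n m _ IHf _ IHg -> -> n' m' /wt_Tens_inv [a [b [c [d [W1 W2 -> ->]]]]].
  have [-> ->] := IHf _ _ W1; have [-> ->] := IHg _ _ W2; done.
- by move=> n m n' m' /wt_Zero_inv [-> ->].
- move=> f g n m _ IHf _ _ n' m' /wt_Add_inv [W _]; exact: IHf.
- move=> c f n m _ IHf n' m' /wt_Scal_inv W; exact: IHf.
Qed.

Ltac inv_wt := repeat match goal with
  | H : @wt _ (Comp _ _) _ _ |- _ => apply wt_Comp_inv in H; destruct H as [? [? ?]]
  | H : @wt _ (Tens _ _) _ _ |- _ =>
      apply wt_Tens_inv in H; destruct H as [? [? [? [? [? ? ? ?]]]]]; subst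
  | H : @wt _ (Add _ _) _ _ |- _ => apply wt_Add_inv in H; destruct H as [? ?]
  | H : @wt _ (Scal _ _) _ _ |- _ => apply wt_Scal_inv in H
  | H : @wt _ (Defs.Id _ _) _ _ |- _ => apply wt_Id_inv in H; destruct H as [? ?]; subst
  | H : @wt _ (Defs.Zero _ _ _) _ _ |- _ => apply wt_Zero_inv in H; destruct H as [? ?]; subst
  end.

Ltac wtac := repeat (match goal with
  | |- @wt _ (Comp _ _) _ _ => eapply wt_comp
  | |- @wt _ (Tens _ _) _ _ => eapply wt_tens
  | |- @wt _ (Add _ _) _ _ => eapply wt_add
  | |- @wt _ (Scal _ _) _ _ => eapply wt_scal
  | |- @wt _ (Defs.Id _ _) _ _ => eapply wt_id
  | |- @wt _ (Defs.Zero _ _ _) _ _ => eapply wt_zero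
  | |- @wt _ (Defs.Gx _) _ _ => eapply wt_x
  | |- @wt _ (Defs.Gtau _) _ _ => eapply wt_tau
  | |- @wt _ (Defs.Gcap _) _ _ => eapply wt_cap
  | |- @wt _ (Defs.Gcup _) _ _ => eapply wt_cup
  | |- _ = _ => first [reflexivity | lia]
  | H : @wt _ ?f _ _ |- @wt _ ?f _ _ => exact H
  end).

Ltac uniq_wt := repeat match goal with
  H1 : @wt _ ?f ?a ?b, H2 : @wt _ ?f ?c ?d |- _ =>
    let e1 := fresh "e" in let e2 := fresh "e" in
    destruct (wt_uniq H1 H2) as [e1 e2]; clear H2; try subst
  | H : (?x + ?y)%N = (?z + ?y)%N |- _ => move/addIn: H => H; try subst
  | H : (?y + ?x)%N = (?y + ?z)%N |- _ => move/addnI: H => H; try subst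
  end.

Lemma nb_eq_wt n m f g : E n m f g -> wt f n m /\ wt g n m.
Proof.
elim=> {n m f g}; intros; repeat match goal with H : _ /\ _ |- _ => destruct H end;
  split; unfold Defs.Sub in *; inv_wt; wtac.
Qed.

Definition typed f := exists n m, wt f n m.
Definition Req f g := (exists n m, E n m f g) \/ (~ typed f /\ ~ typed g).

Lemma Req_refl f : Req f f.
Proof.
case: (EM (typed f)) => [[n [m H]]|H]; [left; exists n, m; exact: Defs.eq_refl|by right].
Qed.

Lemma Req_wt f g n m : Req f g -> wt f n m <-> wt g n m.
Proof.
case=> [[n' [m' H]]|[H1 H2]].
  have [W1 W2] := nb_eq_wt H; split=> W.
    by have [-> ->] := wt_uniq W W1.
  by have [-> ->] := wt_uniq W W2.
by split=> W; [case: H1|case: H2]; exists n, m.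
Qed.

Lemma Req_eq f g n m : Req f g -> wt f n m -> E n m f g.
Proof.
case=> [[n' [m' H]]|[H1 H2]] W; last by case: H1; exists n, m.
have [W1 _] := nb_eq_wt H; by have [-> ->] := wt_uniq W W1.
Qed.

Lemma Req_sym f g : Req f g -> Req g f.
Proof. case=> [[n [m H]]|[H1 H2]]; [left; exists n, m; exact: Defs.eq_sym|by right]. Qed.

Lemma Req_trans f g h : Req f g -> Req g h -> Req f h.
Proof.
move=> H1 H2; case: (EM (typed f)) => [[n [m W]]|N].
  left; exists n, m; apply: Defs.eq_trans (Req_eq H1 W) _.
  by apply: Req_eq H2 _; rewrite -(Req_wt _ _ H1).
right; split=> // [[n [m W]]]; apply: N; exists n, m.
by rewrite (Req_wt _ _ H1) (Req_wt _ _ H2).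
Qed.

Lemma Req_crit u v :
  (forall n m, wt u n m -> E n m u v) -> (forall n m, wt v n m -> typed u) -> Req u v.
Proof.
move=> H1 H2; case: (EM (typed u)) => [[n [m W]]|N].
  by left; exists n, m; apply: H1.
right; split=> // [[n [m W]]]; exact: N (H2 _ _ W).
Qed.

Lemma Req_Comp f f' g g' : Req f f' -> Req g g' -> Req (Comp f g) (Comp f' g').
Proof.
move=> Hf Hg; apply: Req_crit => n m /wt_Comp_inv [k [W1 W2]].
  apply: Defs.eq_comp; [exact: Req_eq Hf W2|exact: Req_eq Hg W1].
exists n, m; econstructor; first by rewrite (Req_wt _ _ Hg); eauto.
by rewrite (Req_wt _ _ Hf); eauto.
Qed.

Lemma Req_Tens f f' g g' : Req f f' -> Req g g' -> Req (Tens f g) (Tens f' g').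
Proof.
move=> Hf Hg; apply: Req_crit => n m /wt_Tens_inv [a [b [c [d [W1 W2 E1 E2]]]]]; subst.
  apply: Defs.eq_tens; [exact: Req_eq Hf W1|exact: Req_eq Hg W2].
exists (a + c)%N, (b + d)%N; econstructor; last 2 first.
- reflexivity. - reflexivity.
- by rewrite (Req_wt _ _ Hf); eauto.
- by rewrite (Req_wt _ _ Hg); eauto.
Qed.

Lemma Req_Add f f' g g' : Req f f' -> Req g g' -> Req (Add f g) (Add f' g').
Proof.
move=> Hf Hg; apply: Req_crit => n m /wt_Add_inv [W1 W2].
  apply: Defs.eq_add; [exact: Req_eq Hf W1|exact: Req_eq Hg W2].
exists n, m; econstructor; first by rewrite (Req_wt _ _ Hf); eauto.
by rewrite (Req_wt _ _ Hg); eauto.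
Qed.

Lemma Req_Scal c f f' : Req f f' -> Req (Scal c f) (Scal c f').
Proof.
move=> Hf; apply: Req_crit => n m /wt_Scal_inv W.
  apply: Defs.eq_scal; exact: Req_eq Hf W.
exists n, m; econstructor.
by rewrite (Req_wt _ _ Hf); eauto.
Qed.


Definition M := {P : tm -> Prop | exists f, P = Req f}.
Definition cl f : M := exist _ (Req f) (ex_intro _ f erefl).

Lemma cl_eq f g : cl f = cl g <-> Req f g.
Proof.
split.
  by move=> /(f_equal sval) /= e; have := Req_refl g; rewrite -e.
move=> H; apply: eq_sig_hprop; first by move=> *; exact: Prop_irrelevance.
rewrite /=; apply: funext => h; apply: propext; split => H'.
  exact: Req_trans (Req_sym H) H'.
exact: Req_trans H H'.
Qed.

Definition rep (a : M) : tm := sval (cid (svalP a)).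

Lemma rep_spec a : sval a = Req (rep a).
Proof. by rewrite /rep; case: (cid (svalP a)) => f e /=. Qed.

Lemma cl_rep a : cl (rep a) = a.
Proof.
apply: eq_sig_hprop => [*|]; first exact: Prop_irrelevance.
by rewrite /= rep_spec.
Qed.

Lemma cl_ind (P : M -> Prop) : (forall f, P (cl f)) -> forall a, P a.
Proof. by move=> H a; rewrite -(cl_rep a). Qed.

Lemma Req_rep f : Req (rep (cl f)) f.
Proof. by apply/cl_eq; rewrite cl_rep. Qed.

Lemma cl_crit u v :
  (forall n m, wt u n m -> E n m u v) -> (forall n m, wt v n m -> typed u) -> cl u = cl v.
Proof. by move=> H1 H2; apply/cl_eq; apply: Req_crit. Qed.

Lemma cl_E n m u v : E n m u v -> cl u = cl v.
Proof. by move=> H; apply/cl_eq; left; exists n, m. Qed.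

Definition mcomp a b := cl (Comp (rep a) (rep b)).
Definition mtens a b := cl (Tens (rep a) (rep b)).
Definition madd a b := cl (Add (rep a) (rep b)).
Definition mscal (c : K) a := cl (Scal c (rep a)).
Definition mid n := cl (Id n).
Definition mzero n m := cl (Zero n m).
Definition mx := cl Gx.
Definition mtau := cl Gtau.
Definition mcap := cl Gcap.
Definition mcup := cl Gcup.

Lemma clComp f g : cl (Comp f g) = mcomp (cl f) (cl g).
Proof. by apply/cl_eq; apply: Req_Comp; apply: Req_sym; apply: Req_rep. Qed.
Lemma clTens f g : cl (Tens f g) = mtens (cl f) (cl g).
Proof. by apply/cl_eq; apply: Req_Tens; apply: Req_sym; apply: Req_rep. Qed.
Lemma clAdd f g : cl (Add f g) = madd (cl f) (cl g).
Proof. by apply/cl_eq; apply: Req_Add; apply: Req_sym; apply: Req_rep. Qed.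
Lemma clScal c f : cl (Scal c f) = mscal c (cl f).
Proof. by apply/cl_eq; apply: Req_Scal; apply: Req_sym; apply: Req_rep. Qed.

Definition clE := (clComp, clTens, clAdd, clScal).

Definition ty a n m := wt (rep a) n m.
Lemma ty_cl f n m : ty (cl f) n m <-> wt f n m.
Proof. exact: Req_wt (Req_rep f). Qed.

Lemma ty_uniq a n m n' m' : ty a n m -> ty a n' m' -> n = n' /\ m = m'.
Proof. exact: wt_uniq. Qed.


Lemma ty_comp a b n m p : ty b n m -> ty a m p -> ty (mcomp a b) n p.
Proof. by elim/cl_ind: a => f; elim/cl_ind: b => g; rewrite -clComp !ty_cl => *; wtac. Qed.
Lemma ty_tens a b n1 m1 n2 m2 : ty a n1 m1 -> ty b n2 m2 -> ty (mtens a b) (n1 + n2) (m1 + m2).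
Proof. by elim/cl_ind: a => f; elim/cl_ind: b => g; rewrite -clTens !ty_cl => *; wtac. Qed.
Lemma ty_add a b n m : ty a n m -> ty b n m -> ty (madd a b) n m.
Proof. by elim/cl_ind: a => f; elim/cl_ind: b => g; rewrite -clAdd !ty_cl => *; wtac. Qed.
Lemma ty_scal c a n m : ty a n m -> ty (mscal c a) n m.
Proof. by elim/cl_ind: a => f; rewrite -clScal !ty_cl => *; wtac. Qed.
Lemma ty_id n : ty (mid n) n n. Proof. by rewrite ty_cl; wtac. Qed.
Lemma ty_zero n m : ty (mzero n m) n m. Proof. by rewrite ty_cl; wtac. Qed.
Lemma ty_x : ty mx 1 1. Proof. by rewrite ty_cl; wtac. Qed.
Lemma ty_tau : ty mtau 2 2. Proof. by rewrite ty_cl; wtac. Qed.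
Lemma ty_cap : ty mcap 2 0. Proof. by rewrite ty_cl; wtac. Qed.
Lemma ty_cup : ty mcup 0 2. Proof. by rewrite ty_cl; wtac. Qed.

Lemma compA a b c : mcomp a (mcomp b c) = mcomp (mcomp a b) c.
Proof.
elim/cl_ind: a => f; elim/cl_ind: b => g; elim/cl_ind: c => h; rewrite -!clComp.
apply: cl_crit => n m W; inv_wt; first by apply: eq_compA; eauto.
by do 2 eexists; wtac.
Qed.

Lemma comp1m a n m : ty a n m -> mcomp (mid m) a = a.
Proof.
elim/cl_ind: a => f; rewrite ty_cl => W; rewrite /mid -clComp.
by apply: cl_E; apply: eq_id_comp W.
Qed.

Lemma compm1 a n m : ty a n m -> mcomp a (mid n) = a.
Proof.
elim/cl_ind: a => f; rewrite ty_cl => W; rewrite /mid -clComp.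
by apply: cl_E; apply: eq_comp_id W.
Qed.

Lemma tensA a b c : mtens a (mtens b c) = mtens (mtens a b) c.
Proof.
elim/cl_ind: a => f; elim/cl_ind: b => g; elim/cl_ind: c => h; rewrite -!clTens.
apply: cl_crit => n m W.
  by apply: eq_tensA.
by inv_wt; do 2 eexists; wtac.
Qed.

Lemma tens0m a : mtens (mid 0) a = a.
Proof.
elim/cl_ind: a => f; rewrite /mid -clTens.
apply: cl_crit => n m W.
  by inv_wt; apply: eq_tens_unitl.
by do 2 eexists; wtac.
Qed.

Lemma tensm0 a : mtens a (mid 0) = a.
Proof.
elim/cl_ind: a => f; rewrite /mid -clTens.
apply: cl_crit => n m W.
  by inv_wt; rewrite !addn0; apply: eq_tens_unitr.
by do 2 eexists; wtac.
Qed.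

Lemma tens_id a b : mtens (mid a) (mid b) = mid (a + b).
Proof. by rewrite /mid -clTens; apply: cl_E; apply: eq_tens_id. Qed.

Lemma interchange (f f' g g' : M) n1 m1 p1 n2 m2 p2 :
  ty f' n1 m1 -> ty f m1 p1 -> ty g' n2 m2 -> ty g m2 p2 ->
  mtens (mcomp f f') (mcomp g g') = mcomp (mtens f g) (mtens f' g').
Proof.
elim/cl_ind: f => a; elim/cl_ind: f' => a'; elim/cl_ind: g => b; elim/cl_ind: g' => b'.
rewrite !ty_cl => W1 W2 W3 W4; rewrite -!clE.
by apply: cl_E; apply: eq_interchange; eauto.
Qed.

Lemma addA a b c : madd a (madd b c) = madd (madd a b) c.
Proof.
elim/cl_ind: a => f; elim/cl_ind: b => g; elim/cl_ind: c => h; rewrite -!clAdd.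
apply: cl_crit => n m W; inv_wt; first by apply: eq_addA.
by do 2 eexists; wtac.
Qed.

Lemma addC a b : madd a b = madd b a.
Proof.
elim/cl_ind: a => f; elim/cl_ind: b => g; rewrite -!clAdd.
apply: cl_crit => n m W; inv_wt; first by apply: eq_addC.
by do 2 eexists; wtac.
Qed.

Lemma add0 a n m : ty a n m -> madd a (mzero n m) = a.
Proof.
elim/cl_ind: a => f; rewrite ty_cl => W; rewrite /mzero -clAdd.
by apply: cl_E; apply: eq_add0.
Qed.

Lemma addN a n m : ty a n m -> madd a (mscal (-1) a) = mzero n m.
Proof.
elim/cl_ind: a => f; rewrite ty_cl => W; rewrite /mzero -clScal -clAdd.
by apply: cl_E; apply: eq_addN.
Qed.

Lemma scal1 a : mscal 1 a = a.
Proof.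
elim/cl_ind: a => f; rewrite -clScal.
apply: cl_crit => n m W; inv_wt; first by apply: eq_scal1.
by do 2 eexists; wtac.
Qed.

Lemma scalA c d a : mscal c (mscal d a) = mscal (c * d) a.
Proof.
elim/cl_ind: a => f; rewrite -!clScal.
apply: cl_crit => n m W; inv_wt; first by apply: eq_scalA.
by do 2 eexists; wtac.
Qed.

Lemma scalDr c a b : mscal c (madd a b) = madd (mscal c a) (mscal c b).
Proof.
elim/cl_ind: a => f; elim/cl_ind: b => g; rewrite -!clE.
apply: cl_crit => n m W; inv_wt; first by apply: eq_scalDr.
by do 2 eexists; wtac.
Qed.

Lemma scalDl c d a : mscal (c + d) a = madd (mscal c a) (mscal d a).
Proof.
elim/cl_ind: a => f; rewrite -!clE.
apply: cl_crit => n m W; inv_wt; first by apply: eq_scalDl.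
by do 2 eexists; wtac.
Qed.

Lemma compDl a b c : mcomp (madd a b) c = madd (mcomp a c) (mcomp b c).
Proof.
elim/cl_ind: a => f; elim/cl_ind: b => g; elim/cl_ind: c => h; rewrite -!clE.
apply: cl_crit => n m W; inv_wt; first by apply: eq_compDl; eauto.
uniq_wt; by do 2 eexists; wtac.
Qed.

Lemma compDr a b c : mcomp a (madd b c) = madd (mcomp a b) (mcomp a c).
Proof.
elim/cl_ind: a => f; elim/cl_ind: b => g; elim/cl_ind: c => h; rewrite -!clE.
apply: cl_crit => n m W; inv_wt; first by apply: eq_compDr; eauto.
uniq_wt; by do 2 eexists; wtac.
Qed.

Lemma compZl c a b : mcomp (mscal c a) b = mscal c (mcomp a b).
Proof.
elim/cl_ind: a => f; elim/cl_ind: b => g; rewrite -!clE.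
apply: cl_crit => n m W; inv_wt; first by apply: eq_compZl; eauto.
by do 2 eexists; wtac.
Qed.

Lemma compZr c a b : mcomp a (mscal c b) = mscal c (mcomp a b).
Proof.
elim/cl_ind: a => f; elim/cl_ind: b => g; rewrite -!clE.
apply: cl_crit => n m W; inv_wt; first by apply: eq_compZr; eauto.
by do 2 eexists; wtac.
Qed.

Lemma tensDl a b c : mtens (madd a b) c = madd (mtens a c) (mtens b c).
Proof.
elim/cl_ind: a => f; elim/cl_ind: b => g; elim/cl_ind: c => h; rewrite -!clE.
apply: cl_crit => n m W; first by apply: eq_tensDl.
inv_wt; uniq_wt; by do 2 eexists; wtac.
Qed.

Lemma tensDr a b c : mtens a (madd b c) = madd (mtens a b) (mtens a c).
Proof.
elim/cl_ind: a => f; elim/cl_ind: b => g; elim/cl_ind: c => h; rewrite -!clE.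
apply: cl_crit => n m W; first by apply: eq_tensDr.
inv_wt; uniq_wt; by do 2 eexists; wtac.
Qed.

Lemma tensZl c a b : mtens (mscal c a) b = mscal c (mtens a b).
Proof.
elim/cl_ind: a => f; elim/cl_ind: b => g; rewrite -!clE.
apply: cl_crit => n m W; first by inv_wt; apply: eq_tensZl; wtac.
by inv_wt; do 2 eexists; wtac.
Qed.

Lemma tensZr c a b : mtens a (mscal c b) = mscal c (mtens a b).
Proof.
elim/cl_ind: a => f; elim/cl_ind: b => g; rewrite -!clE.
apply: cl_crit => n m W; first by inv_wt; apply: eq_tensZr; wtac.
by inv_wt; do 2 eexists; wtac.
Qed.

Lemma tau2 : mcomp mtau mtau = mzero 2 2.
Proof. by rewrite -clE; apply: cl_E; apply: rel_tau2. Qed.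
Lemma bubble : mcomp mcap mcup = mscal (tparam K t) (mid 0).
Proof. by rewrite /mid /mcap /mcup /mx /mtau /mzero -!clE; apply: cl_E; apply: rel_bubble. Qed.
Lemma zigzag1 : mcomp (mtens mcap (mid 1)) (mtens (mid 1) mcup) = mid 1.
Proof. by rewrite /mid /mcap /mcup /mx /mtau /mzero -!clE; apply: cl_E; apply: rel_zigzag1. Qed.
Lemma zigzag2 : mcomp (mtens (mid 1) mcap) (mtens mcup (mid 1)) = mid 1.
Proof. by rewrite /mid /mcap /mcup /mx /mtau /mzero -!clE; apply: cl_E; apply: rel_zigzag2. Qed.
Lemma cap_tau : mcomp mcap mtau = mzero 2 0.
Proof. by rewrite /mid /mcap /mcup /mx /mtau /mzero -!clE; apply: cl_E; apply: rel_cap_tau. Qed.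
Lemma pitchfork : mcomp (mtens (mid 1) mcap) (mtens mtau (mid 1)) =
  mcomp (mtens mcap (mid 1)) (mtens (mid 1) mtau).
Proof. by rewrite /mid /mcap /mcup /mx /mtau /mzero -!clE; apply: cl_E; apply: rel_pitchfork. Qed.
Lemma dot_slide :
  madd (mcomp (mtens mx (mid 1)) mtau) (mscal (-1) (mcomp mtau (mtens (mid 1) mx))) =
  madd (mtens (mid 1) (mid 1)) (mscal (-1) (mcomp mcup mcap)).
Proof. by rewrite /mid /mcap /mcup /mx /mtau /mzero -!clE; apply: cl_E; apply: rel_dot_slide. Qed.
Lemma cap_dot : mcomp mcap (mtens (mid 1) mx) = mscal (-1) (mcomp mcap (mtens mx (mid 1))).
Proof. by rewrite /mid /mcap /mcup /mx /mtau /mzero -!clE; apply: cl_E; apply: rel_cap_dot. Qed.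

End Quot.

Local Open Scope ring_scope.

Section HomDef.
Variable K : fieldType.
Variable t : bool.
Local Notation M := (M K t).
Local Notation ty := (@ty K t).

Definition Hom (n m : nat) := {a : M | ty a n m}.
End HomDef.

Section HomZmod.
Variables (K : fieldType) (t : bool) (n m : nat).
Local Notation M := (M K t).
Local Notation H := (Hom K t n m).

HB.instance Definition _ := gen_eqMixin H.
HB.instance Definition _ := gen_choiceMixin H.

Lemma hom_inj (a b : H) : sval a = sval b -> a = b.
Proof. by apply: eq_sig_hprop => *; exact: Prop_irrelevance. Qed.

Definition hzero : H := exist _ (mzero K t n m) (ty_zero _ _ _ _).
Definition hadd (a b : H) : H := exist _ (madd (sval a) (sval b)) (ty_add (svalP a) (svalP b)).
Definition hscal (c : K) (a : H) : H := exist _ (mscal c (sval a)) (ty_scal c (svalP a)).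
Definition hopp (a : H) : H := hscal (-1) a.

Lemma haddA : associative hadd.
Proof. by move=> a b c; apply: hom_inj; rewrite /= addA. Qed.
Lemma haddC : commutative hadd.
Proof. by move=> a b; apply: hom_inj; rewrite /= addC. Qed.
Lemma hadd0 : left_id hzero hadd.
Proof. by move=> a; apply: hom_inj; rewrite /= addC (add0 (svalP a)). Qed.
Lemma haddN : left_inverse hzero hopp hadd.
Proof. by move=> a; apply: hom_inj; rewrite /= addC (addN (svalP a)). Qed.

HB.instance Definition _ := GRing.isZmodule.Build H haddA haddC hadd0 haddN.

Lemma hscalA c d (a : H) : hscal c (hscal d a) = hscal (c * d) a.
Proof. by apply: hom_inj; rewrite /= scalA. Qed.
Lemma hscal1 : left_id 1 hscal.
Proof. by move=> a; apply: hom_inj; rewrite /= scal1. Qed.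
Lemma hscalDr : right_distributive hscal +%R.
Proof. by move=> c a b; apply: hom_inj; rewrite /= scalDr. Qed.
Lemma hscalDl (a : H) : {morph hscal^~ a : c d / c + d}.
Proof. by move=> c d; apply: hom_inj; rewrite /= scalDl. Qed.

HB.instance Definition _ := GRing.Zmodule_isLmodule.Build K H hscalA hscal1 hscalDr hscalDl.

Lemma val_add (a b : H) : sval (a + b) = madd (sval a) (sval b). Proof. by []. Qed.
Lemma val_zero : sval (0 : H) = mzero K t n m. Proof. by []. Qed.
Lemma val_scal c (a : H) : sval (c *: a) = mscal c (sval a). Proof. by []. Qed.
Lemma val_opp (a : H) : sval (- a) = mscal (-1) (sval a). Proof. by []. Qed.
End HomZmod.

Section Ops.
Variables (K : fieldType) (t : bool).
Local Notation M := (M K t).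
Local Notation Hom := (Hom K t).

Definition compH n m p (a : Hom m p) (b : Hom n m) : Hom n p :=
  exist _ (mcomp (sval a) (sval b)) (ty_comp (svalP b) (svalP a)).
Definition tensH n1 m1 n2 m2 (a : Hom n1 m1) (b : Hom n2 m2) : Hom (n1 + n2) (m1 + m2) :=
  exist _ (mtens (sval a) (sval b)) (ty_tens (svalP a) (svalP b)).
Definition idH n : Hom n n := exist _ (mid K t n) (ty_id _ _ _).
Definition xH : Hom 1 1 := exist _ (mx K t) (ty_x _ _).
Definition tauH : Hom 2 2 := exist _ (mtau K t) (ty_tau _ _).
Definition capH : Hom 2 0 := exist _ (mcap K t) (ty_cap _ _).
Definition cupH : Hom 0 2 := exist _ (mcup K t) (ty_cup _ _).

Definition End n := Hom n n.
End Ops.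

Section EndRing.
Variables (K : fieldType) (t : bool) (n : nat).
Local Notation E := (End K t n).
HB.instance Definition _ := GRing.Lmodule.on E.

Lemma emulA : associative (@compH K t n n n).
Proof. by move=> a b c; apply: hom_inj; rewrite /= compA. Qed.
Lemma emul1 : left_id (idH K t n) (@compH K t n n n).
Proof. by move=> a; apply: hom_inj; rewrite /= (comp1m (svalP a)). Qed.
Lemma emulr1 : right_id (idH K t n) (@compH K t n n n).
Proof. by move=> a; apply: hom_inj; rewrite /= (compm1 (svalP a)). Qed.
Lemma emulDl : left_distributive (@compH K t n n n) +%R.
Proof. by move=> a b c; apply: hom_inj; rewrite /= compDl. Qed.
Lemma emulDr : right_distributive (@compH K t n n n) +%R.
Proof. by move=> a b c; apply: hom_inj; rewrite /= compDr. Qed.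

HB.instance Definition _ := GRing.Zmodule_isPzRing.Build E emulA emul1 emulr1 emulDl emulDr.
End EndRing.

Section Test.
Variables (K : fieldType) (t : bool).
Check (fun a b : End K t 3 => a * b + 1).
Check (fun a b : Hom K t 3 2 => a - b).
End Test.

Local Close Scope ring_scope.

Lemma ty_tensX (K : fieldType) (t : bool) (a b : M K t) n1 m1 n2 m2 n m :
  ty a n1 m1 -> ty b n2 m2 -> n = (n1 + n2)%N -> m = (m1 + m2)%N -> ty (mtens a b) n m.
Proof. by move=> H1 H2 -> ->; apply: ty_tens. Qed.

Definition composable (K : fieldType) (t : bool) (f g : M K t) :=
  exists n m p, ty g n m /\ ty f m p.

Ltac tyt := lazymatch goal with
  | |- @ty _ _ (mcomp _ _) _ _ => eapply ty_comp; [tyt | tyt]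
  | |- @ty _ _ (mtens _ _) _ _ => eapply ty_tensX; [tyt | tyt | reflexivity | reflexivity]
  | |- @ty _ _ (madd _ _) _ _ => eapply ty_add; [tyt | tyt]
  | |- @ty _ _ (mscal _ _) _ _ => eapply ty_scal; tyt
  | |- @ty _ _ (mid _ _ _) _ _ => apply: ty_id
  | |- @ty _ _ (mzero _ _ _ _) _ _ => apply: ty_zero
  | |- @ty _ _ (mx _ _) _ _ => apply: ty_x
  | |- @ty _ _ (mtau _ _) _ _ => apply: ty_tau
  | |- @ty _ _ (mcap _ _) _ _ => apply: ty_cap
  | |- @ty _ _ (mcup _ _) _ _ => apply: ty_cup
  | |- @ty _ _ (sval ?h) _ _ => exact: (svalP h)
  | H : @ty _ _ ?a _ _ |- @ty _ _ ?a _ _ => exact: H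
  end.

Ltac tyx := repeat match goal with
  | |- composable _ _ => do 3 eexists
  | |- exists _, _ => eexists
  | |- _ /\ _ => split
  end; tyt.

Section Diag.
Variables (K : fieldType) (t : bool).
Local Notation M := (M K t).
Local Notation ty := (@ty K t).
Local Notation I := (mid K t 1).
Local Notation mid := (mid K t).
Local Notation X := (mx K t).
Local Notation T := (mtau K t).
Local Notation CAP := (mcap K t).
Local Notation CUP := (mcup K t).
Local Notation "a ⊗ b" := (mtens a b) (at level 40, left associativity).
Local Notation "a ∘ b" := (mcomp a b) (at level 45, right associativity).
Implicit Types a b f g A B : M.

Lemma interchangeX f f' g g' : composable f f' -> composable g g' ->
  (mcomp f f') ⊗ (mcomp g g') = (f ⊗ g) ∘ (f' ⊗ g').
Proof. by move=> [n1 [m1 [p1 [H1 H2]]]] [n2 [m2 [p2 [H3 H4]]]]; apply: interchange H1 H2 H3 H4. Qed.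

Lemma comp1mX a m : (exists n, ty a n m) -> mid m ∘ a = a.
Proof. by move=> [n H]; apply: comp1m H. Qed.
Lemma compm1X a n : (exists m, ty a n m) -> a ∘ mid n = a.
Proof. by move=> [m H]; apply: compm1 H. Qed.

Lemma tens_comp_l k A B : composable A B -> mid k ⊗ (A ∘ B) = (mid k ⊗ A) ∘ (mid k ⊗ B).
Proof.
move=> HAB; rewrite -interchangeX //; last by exists k, k, k; split; apply: ty_id.
by rewrite comp1mX //; exists k; apply: ty_id.
Qed.

Lemma tens_comp_r k A B : composable A B -> (A ∘ B) ⊗ mid k = (A ⊗ mid k) ∘ (B ⊗ mid k).
Proof.
move=> HAB; rewrite -interchangeX //; last by exists k, k, k; split; apply: ty_id.
by rewrite comp1mX //; exists k; apply: ty_id.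
Qed.

Lemma slide1 A B m1 n2 : (exists n1, ty A n1 m1) -> (exists m2, ty B n2 m2) ->
  (mid m1 ⊗ B) ∘ (A ⊗ mid n2) = A ⊗ B.
Proof.
move=> [n1 HA] [m2 HB]; rewrite -interchangeX; first by rewrite (comp1m HA) (compm1 HB).
  by exists n1, m1, m1; split=> //; apply: ty_id.
by exists n2, n2, m2; split=> //; apply: ty_id.
Qed.

Lemma slide2 A B n1 m2 : (exists m1, ty A n1 m1) -> (exists n2, ty B n2 m2) ->
  (A ⊗ mid m2) ∘ (mid n1 ⊗ B) = A ⊗ B.
Proof.
move=> [m1 HA] [n2 HB]; rewrite -interchangeX; first by rewrite (comp1m HB) (compm1 HA).
  by exists n1, n1, m1; split=> //; apply: ty_id.
by exists n2, m2, m2; split=> //; apply: ty_id.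
Qed.

Lemma ZZ : (I ⊗ (CAP ⊗ I)) ∘ (CUP ⊗ (I ⊗ I)) = I ⊗ I.
Proof.
rewrite !tensA -interchangeX ?zigzag2 ?comp1mX //; tyx.
Qed.


Lemma mid2 : mid 2 = I ⊗ I. Proof. by rewrite tens_id. Qed.

Definition bend u := (CAP ⊗ I) ∘ (I ⊗ u).

Lemma recon u : ty u 0 2 -> (I ⊗ bend u) ∘ CUP = u.
Proof.
move=> Hu; rewrite /bend tens_comp_l; last by tyx.
rewrite -compA [I ⊗ (I ⊗ u)]tensA tens_id.
rewrite -[X in _ ∘ (_ ∘ X)](tensm0 CUP) slide1; try tyx.
rewrite -[X in _ ∘ X](slide2 (m2 := 2) (n1 := 0)); try tyx.
rewrite tens0m compA mid2 ZZ -mid2 comp1mX //; tyx.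
Qed.

Lemma bend_x1 : bend ((X ⊗ I) ∘ CUP) = mscal (-1) X.
Proof.
rewrite /bend tens_comp_l; last by tyx.
rewrite compA tensA -tens_comp_r; last by tyx.
rewrite cap_dot tensZl compZl tens_comp_r; last by tyx.
rewrite -tensA tens_id -compA (slide2 (n1 := 1)); try tyx.
rewrite -[X in _ ∘ X](slide1 (m1 := 1) (n2 := 0)); try tyx.
rewrite tensm0 compA zigzag1 comp1mX //; tyx.
Qed.

Lemma bend_x2 : bend ((I ⊗ X) ∘ CUP) = X.
Proof.
rewrite /bend tens_comp_l; last by tyx.
rewrite compA tensA tens_id (slide2 (n1 := 2)); try tyx.
rewrite -(slide1 (m1 := 0) (n2 := 1)); try tyx.
rewrite tens0m -compA zigzag1 compm1X //; tyx.
Qed.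

Lemma cup_dot : (X ⊗ I) ∘ CUP = mscal (-1) ((I ⊗ X) ∘ CUP).
Proof.
have <- := @recon ((X ⊗ I) ∘ CUP); last by tyx.
by rewrite bend_x1 tensZr compZl.
Qed.


Definition Phi f := (I ⊗ (I ⊗ CAP)) ∘ ((I ⊗ (f ⊗ I)) ∘ (CUP ⊗ (I ⊗ I))).

Lemma Phi_add f g : Phi (madd f g) = madd (Phi f) (Phi g).
Proof. by rewrite /Phi tensDl tensDr compDl compDr. Qed.
Lemma Phi_scal c f : Phi (mscal c f) = mscal c (Phi f).
Proof. by rewrite /Phi tensZl tensZr compZl compZr. Qed.

Lemma Phi_tau : Phi T = T.
Proof.
rewrite /Phi compA -tens_comp_l; last by tyx.
rewrite pitchfork tens_comp_l; last by tyx.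
rewrite -compA [I ⊗ (I ⊗ T)]tensA -!mid2 slide1; try tyx.
rewrite -(slide2 (A := CUP) (B := T) (n1 := 0) (m2 := 2)); try tyx.
rewrite tens0m compA mid2 ZZ -mid2 comp1mX //; tyx.
Qed.

Lemma Phi_x1 f : ty f 2 2 -> Phi ((X ⊗ I) ∘ f) = (I ⊗ X) ∘ Phi f.
Proof.
move=> Hf; rewrite /Phi tens_comp_r; last by tyx.
rewrite tens_comp_l; last by tyx.
rewrite !compA -tens_comp_l; last by tyx.
rewrite -[(X ⊗ I) ⊗ I]tensA tens_id slide1; try tyx.
rewrite -(slide2 (A := X) (B := CAP) (n1 := 1) (m2 := 0)); try tyx.
by rewrite tensm0 tens_comp_l; try tyx.
Qed.

Lemma Phi_x2 f : ty f 2 2 -> Phi (f ∘ (I ⊗ X)) = Phi f ∘ (X ⊗ I).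
Proof.
move=> Hf; rewrite /Phi tens_comp_r; last by tyx.
rewrite tens_comp_l; last by tyx.
rewrite -!compA -[(I ⊗ X) ⊗ I]tensA [I ⊗ (I ⊗ (X ⊗ I))]tensA -!mid2 slide1; try tyx.
rewrite -(slide2 (A := CUP) (B := X ⊗ I) (n1 := 0) (m2 := 2)); try tyx.
by rewrite tens0m.
Qed.

Lemma Phi_id : Phi (mid 2) = CUP ∘ CAP.
Proof.
rewrite /Phi !tens_id comp1mX; last by tyx.
rewrite [I ⊗ (I ⊗ CAP)]tensA -!mid2 slide1; try tyx.
rewrite -(slide2 (A := CUP) (B := CAP) (n1 := 0) (m2 := 0)); try tyx.
by rewrite tens0m tensm0.
Qed.

Lemma Phi_C : Phi (CUP ∘ CAP) = mid 2.
Proof.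
rewrite /Phi tens_comp_r; last by tyx.
rewrite tens_comp_l; last by tyx.
rewrite -[X in _ ∘ X]compA ZZ compA -tens_comp_l; last by tyx.
rewrite zigzag2 -mid2 comp1mX //; tyx.
Qed.

Lemma dot_slide2 :
  madd ((I ⊗ X) ∘ T) (mscal (-1) (T ∘ (X ⊗ I))) = madd (CUP ∘ CAP) (mscal (-1) (mid 2)).
Proof.
have := congr1 Phi (dot_slide K t).
rewrite !Phi_add !Phi_scal Phi_x1; last by tyx.
rewrite Phi_x2; last by tyx.
by rewrite Phi_tau -mid2 Phi_id Phi_C.
Qed.

End Diag.

Local Open Scope ring_scope.

Section HomLemmas.
Variables (K : fieldType) (t : bool).
Local Notation Hom := (Hom K t).
Local Notation End := (End K t).
Local Notation idH := (idH K t).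

Lemma compHDl n m p (a b : Hom m p) (c : Hom n m) : compH (a + b) c = compH a c + compH b c.
Proof. by apply: hom_inj; rewrite /= compDl. Qed.
Lemma compHDr n m p (a : Hom m p) (b c : Hom n m) : compH a (b + c) = compH a b + compH a c.
Proof. by apply: hom_inj; rewrite /= compDr. Qed.
Lemma compHZl n m p k (a : Hom m p) (b : Hom n m) : compH (k *: a) b = k *: compH a b.
Proof. by apply: hom_inj; rewrite /= compZl. Qed.
Lemma compHZr n m p k (a : Hom m p) (b : Hom n m) : compH a (k *: b) = k *: compH a b.
Proof. by apply: hom_inj; rewrite /= compZr. Qed.
Lemma compH0l n m p (b : Hom n m) : compH (0 : Hom m p) b = 0.
Proof. by rewrite -(scale0r (0 : Hom m p)) compHZl scale0r. Qed.
Lemma compH0r n m p (a : Hom m p) : compH a (0 : Hom n m) = 0.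
Proof. by rewrite -(scale0r (0 : Hom n m)) compHZr scale0r. Qed.
Lemma compHNl n m p (a : Hom m p) (b : Hom n m) : compH (- a) b = - compH a b.
Proof. by rewrite -scaleN1r compHZl scaleN1r. Qed.
Lemma compHNr n m p (a : Hom m p) (b : Hom n m) : compH a (- b) = - compH a b.
Proof. by rewrite -scaleN1r compHZr scaleN1r. Qed.
Lemma compHBl n m p (a a' : Hom m p) (b : Hom n m) : compH (a - a') b = compH a b - compH a' b.
Proof. by rewrite compHDl compHNl. Qed.
Lemma compHBr n m p (a : Hom m p) (b b' : Hom n m) : compH a (b - b') = compH a b - compH a b'.
Proof. by rewrite compHDr compHNr. Qed.
Lemma compHA n m p q (a : Hom p q) (b : Hom m p) (c : Hom n m) :
  compH a (compH b c) = compH (compH a b) c.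
Proof. by apply: hom_inj; rewrite /= compA. Qed.
Lemma compH1l n m (a : Hom n m) : compH (idH m) a = a.
Proof. by apply: hom_inj; rewrite /= (comp1m (svalP a)). Qed.
Lemma compH1r n m (a : Hom n m) : compH a (idH n) = a.
Proof. by apply: hom_inj; rewrite /= (compm1 (svalP a)). Qed.
Lemma compH_suml n m p (I : Type) (r : seq I) (P : pred I) (F : I -> Hom m p) (c : Hom n m) :
  compH (\sum_(i <- r | P i) F i) c = \sum_(i <- r | P i) compH (F i) c.
Proof. by elim/big_rec2: _ => [|i x y _ <-]; [rewrite compH0l|rewrite compHDl]. Qed.
Lemma compH_sumr n m p (I : Type) (r : seq I) (P : pred I) (F : I -> Hom n m) (c : Hom m p) :
  compH c (\sum_(i <- r | P i) F i) = \sum_(i <- r | P i) compH c (F i).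
Proof. by elim/big_rec2: _ => [|i x y _ <-]; [rewrite compH0r|rewrite compHDr]. Qed.

Lemma tensHDl n1 m1 n2 m2 (a b : Hom n1 m1) (c : Hom n2 m2) : tensH (a + b) c = tensH a c + tensH b c.
Proof. by apply: hom_inj; rewrite /= tensDl. Qed.
Lemma tensHDr n1 m1 n2 m2 (a : Hom n1 m1) (b c : Hom n2 m2) : tensH a (b + c) = tensH a b + tensH a c.
Proof. by apply: hom_inj; rewrite /= tensDr. Qed.
Lemma tensHZl n1 m1 n2 m2 k (a : Hom n1 m1) (c : Hom n2 m2) : tensH (k *: a) c = k *: tensH a c.
Proof. by apply: hom_inj; rewrite /= tensZl. Qed.
Lemma tensHZr n1 m1 n2 m2 k (a : Hom n1 m1) (c : Hom n2 m2) : tensH a (k *: c) = k *: tensH a c.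
Proof. by apply: hom_inj; rewrite /= tensZr. Qed.
Lemma tensH0l n1 m1 n2 m2 (c : Hom n2 m2) : tensH (0 : Hom n1 m1) c = 0.
Proof. by rewrite -(scale0r (0 : Hom n1 m1)) tensHZl scale0r. Qed.
Lemma tensH0r n1 m1 n2 m2 (a : Hom n1 m1) : tensH a (0 : Hom n2 m2) = 0.
Proof. by rewrite -(scale0r (0 : Hom n2 m2)) tensHZr scale0r. Qed.
Lemma tensH_suml n1 m1 n2 m2 (I : Type) (r : seq I) (P : pred I) (F : I -> Hom n1 m1) (c : Hom n2 m2) :
  tensH (\sum_(i <- r | P i) F i) c = \sum_(i <- r | P i) tensH (F i) c.
Proof. by elim/big_rec2: _ => [|i x y _ <-]; [rewrite tensH0l|rewrite tensHDl]. Qed.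
Lemma tensH_sumr n1 m1 n2 m2 (I : Type) (r : seq I) (P : pred I) (F : I -> Hom n2 m2) (c : Hom n1 m1) :
  tensH c (\sum_(i <- r | P i) F i) = \sum_(i <- r | P i) tensH c (F i).
Proof. by elim/big_rec2: _ => [|i x y _ <-]; [rewrite tensH0r|rewrite tensHDr]. Qed.

Lemma interchangeH n1 m1 p1 n2 m2 p2 (a : Hom m1 p1) (a' : Hom n1 m1) (b : Hom m2 p2) (b' : Hom n2 m2) :
  compH (tensH a b) (tensH a' b') = tensH (compH a a') (compH b b').
Proof. by apply: hom_inj; rewrite /= (interchange (svalP a') (svalP a) (svalP b') (svalP b)). Qed.

Lemma tensH_id a b : tensH (idH a) (idH b) = idH (a + b).
Proof. by apply: hom_inj; rewrite /= tens_id. Qed.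

Lemma mulE n (a b : End n) : a * b = compH a b. Proof. by []. Qed.
Lemma oneE n : (1 : End n) = idH n. Proof. by []. Qed.

Definition tensL a b (u : End a) : End (a + b) := tensH u (idH b).
Definition tensR a b (u : End b) : End (a + b) := tensH (idH a) u.

Section TL.
Variables a b : nat.
Lemma tensL_is_additive : additive (@tensL a b).
Proof. by move=> u v; rewrite /tensL -scaleN1r tensHDl tensHZl scaleN1r. Qed.
HB.instance Definition _ := GRing.isZmodMorphism.Build (End a) (End (a + b)) (@tensL a b) tensL_is_additive.
Lemma tensL_is_multiplicative : multiplicative (@tensL a b).
Proof.
split; last by rewrite /tensL oneE tensH_id.
by move=> u v; rewrite /tensL !mulE interchangeH compH1l.
Qed.
HB.instance Definition _ := GRing.isMultiplicative.Build (End a) (End (a + b)) (@tensL a b) tensL_is_multiplicative.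
Lemma tensLZ k (u : End a) : tensL b (k *: u) = k *: tensL b u.
Proof. by rewrite /tensL tensHZl. Qed.

Lemma tensR_is_additive : additive (@tensR a b).
Proof. by move=> u v; rewrite /tensR -scaleN1r tensHDr tensHZr scaleN1r. Qed.
HB.instance Definition _ := GRing.isZmodMorphism.Build (End b) (End (a + b)) (@tensR a b) tensR_is_additive.
Lemma tensR_is_multiplicative : multiplicative (@tensR a b).
Proof.
split; last by rewrite /tensR oneE tensH_id.
by move=> u v; rewrite /tensR !mulE interchangeH compH1l.
Qed.
HB.instance Definition _ := GRing.isMultiplicative.Build (End b) (End (a + b)) (@tensR a b) tensR_is_multiplicative.
Lemma tensRZ k (u : End b) : tensR a (k *: u) = k *: tensR a u.
Proof. by rewrite /tensR tensHZr. Qed.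

Lemma tensLR (u : End a) (v : End b) : tensL b u * tensR a v = tensH u v.
Proof. by rewrite mulE /tensL /tensR interchangeH compH1l compH1r. Qed.
End TL.

Lemma scalemulE n k (u v : End n) : (k *: u) * v = k *: (u * v).
Proof. exact: compHZl. Qed.
Lemma mulscaleE n k (u v : End n) : u * (k *: v) = k *: (u * v).
Proof. exact: compHZr. Qed.

End HomLemmas.

Local Open Scope ring_scope.

Section XiM.
Variables (K : fieldType) (t : bool).
Local Notation mid := (mid K t).
Local Notation X := (mx K t).
Local Notation "a ⊗ b" := (mtens a b) (at level 40, left associativity).
Local Notation "a ∘ b" := (mcomp a b) (at level 45, right associativity).

Definition xiM (n i : nat) := mid i ⊗ (X ⊗ mid (n - i.+1)).

Lemma ty_xiM n i : (i < n)%N -> ty (xiM n i) n n.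
Proof.
move=> lt; apply: ty_tensX; [apply: ty_id| apply: ty_tensX; [apply: ty_x|apply: ty_id| |] | |];
  try reflexivity; lia.
Qed.

Lemma xiM_lsplit a b i : (i < a)%N -> xiM (a + b) i = xiM a i ⊗ mid b.
Proof.
move=> lt; rewrite /xiM.
have -> : (a + b - i.+1 = (a - i.+1) + b)%N by lia.
by rewrite -tens_id !tensA.
Qed.

Lemma xiM_rsplit a b j : (j < b)%N -> xiM (a + b) (a + j) = mid a ⊗ xiM b j.
Proof.
move=> lt; rewrite /xiM.
have -> : (a + b - (a + j).+1 = b - j.+1)%N by lia.
by rewrite -tens_id -tensA.
Qed.

Lemma xiM_comm n i j : (i < n)%N -> (j < n)%N -> xiM n i ∘ xiM n j = xiM n j ∘ xiM n i.
Proof.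
wlog lt_ij : i j / (i <= j)%N.
  move=> H Hi Hj; case: (leqP i j) => [l|l]; first exact: H.
  by symmetry; apply: H => //; apply: ltnW.
move=> Hi Hj; case: (ltngtP i j) => [l| |->] //; last by lia.
have En : n = (i.+1 + (n - i.+1))%N by lia.
have Ej : j = (i.+1 + (j - i.+1))%N by lia.
rewrite En xiM_lsplit // Ej xiM_rsplit; last by lia.
have H1 : ty (xiM i.+1 i) i.+1 i.+1 by apply: ty_xiM.
have H2 : ty (xiM (n - i.+1) (j - i.+1)) (n - i.+1) (n - i.+1) by apply: ty_xiM; lia.
rewrite slide2; [|by exists i.+1|by exists (n - i.+1)%N].
by rewrite slide1; [|by exists i.+1|by exists (n - i.+1)%N].
Qed.
End XiM.

Section Ev.
Variables (K : fieldType) (t : bool) (n : nat).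
Local Notation End := (End K t).
Local Notation P := {mpoly K[n]}.

Lemma cl_xi (i : 'I_n) : cl t (xi_tm K i) = xiM K t n i.
Proof. by rewrite /xi_tm !clTens. Qed.

Lemma ty_xi (i : 'I_n) : ty (cl t (xi_tm K i)) n n.
Proof. by rewrite cl_xi; apply: ty_xiM. Qed.

Definition xE (i : 'I_n) : End n := exist _ (cl t (xi_tm K i)) (ty_xi i).

Lemma xE_comm (i j : 'I_n) : GRing.comm (xE i) (xE j).
Proof. by apply: hom_inj; rewrite /= cl_xi cl_xi xiM_comm. Qed.

Definition monoE (m : 'X_{1..n}) : End n := \prod_(i < n) xE i ^+ m i.
Definition evE (p : P) : End n := \sum_(m <- msupp p) p@_m *: monoE m.

Lemma index_enum_ord : index_enum 'I_n = enum 'I_n.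
Proof. by rewrite enumT /index_enum unlock. Qed.

Lemma link_xpow (i : 'I_n) k : cl t (xpow_tm K i k) = sval (xE i ^+ k).
Proof.
elim: k => [|k IH] //=; rewrite exprS /= clComp IH //.
Qed.

Lemma link_mono (mu : 'X_{1..n}) : cl t (mono_tm K mu) = sval (monoE mu).
Proof.
rewrite /mono_tm /monoE index_enum_ord; elim: (enum 'I_n) => [|i s IH] /=.
  by rewrite big_nil.
by rewrite big_cons clComp IH link_xpow.
Qed.

Lemma link_poly (p : P) : cl t (poly_tm p) = sval (evE p).
Proof.
rewrite /poly_tm /evE; elim: (msupp p) => [|mu s IH] /=.
  by rewrite big_nil.
by rewrite big_cons clAdd clScal IH link_mono.
Qed.

Lemma wt_poly (p : P) : wt (poly_tm p) n n.
Proof. by apply/(ty_cl t); rewrite link_poly; apply: (svalP (evE p)). Qed.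

Lemma evwE k (p : P) : (msize p <= k)%N -> evE p = \sum_(m : 'X_{1..n < k}) p@_m *: monoE m.
Proof.
move=> lt_pk; pose I : subFinType _ := 'X_{1..n < k}.
rewrite /evE (big_mksub I) //=; first last.
  by move=> x /msize_mdeg_lt /leq_trans; apply.
  by rewrite msupp_uniq.
by rewrite big_rmcond //= => i; move/memN_msupp_eq0 ->; rewrite scale0r.
Qed.

Lemma evE_is_additive : additive evE.
Proof.
move=> p q; set k := (msize p + msize q + msize (p - q))%N.
rewrite !(evwE (k := k)); try lia.
by rewrite -sumrB; apply: eq_bigr => i _; rewrite mcoeffB scalerBl.
Qed.
HB.instance Definition _ := GRing.isZmodMorphism.Build P (End n) evE evE_is_additive.

Lemma evEZ c (p : P) : evE (c *: p) = c *: evE p.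
Proof.
set k := (msize p + msize (c *: p))%N.
rewrite !(evwE (k := k)); try lia.
by rewrite scaler_sumr; apply: eq_bigr => i _; rewrite mcoeffZ scalerA.
Qed.

Lemma evEX m : evE 'X_[m] = monoE m.
Proof. by rewrite /evE msuppX big_seq1 mcoeffX eqxx scale1r. Qed.

Lemma monoE0 : monoE 0%MM = 1.
Proof. by rewrite /monoE big1 // => i _; rewrite mnm0E expr0. Qed.

Lemma monoED m1 m2 : monoE (m1 + m2)%MM = monoE m1 * monoE m2.
Proof.
rewrite /monoE.
have comm k j (s : seq 'I_n) (F : 'I_n -> nat) : GRing.comm (xE j ^+ k) (\prod_(i <- s) xE i ^+ F i).
  apply: commr_prod => i _; apply/commrX/commr_sym/commrX; exact: xE_comm.
elim: (index_enum 'I_n) => [|i s IH]; first by rewrite !big_nil mulr1.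
rewrite !big_cons IH mnmDE exprD -!mulrA; congr (_ * _).
by rewrite !mulrA (comm (m2 i) i s m1).
Qed.

Lemma evE1 : evE 1 = 1.
Proof. by rewrite -mpolyX0 evEX monoE0. Qed.

Lemma evE_is_multiplicative : multiplicative evE.
Proof.
split; last exact: evE1.
move=> p q; set k := (msize p + msize q)%N.
rewrite (mpolywME (k := k)); try lia.
rewrite raddf_sum /= !(evwE (k := k)); try lia.
rewrite big_distrlr /= pair_bigA; apply/eq_bigr=> /= -[j1 j2] _ /=.
by rewrite evEZ evEX monoED scalemulE mulscaleE scalerA.
Qed.
HB.instance Definition _ := GRing.isMultiplicative.Build P (End n) evE evE_is_multiplicative.

Lemma evE_comm (p q : P) : GRing.comm (evE p) (evE q).
Proof. by rewrite /GRing.comm -!rmorphM mulrC. Qed.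

Lemma evEC c : evE (c%:MP_[n]) = c *: (1 : End n).
Proof. by rewrite -[c%:MP_[n]]mulr1 mul_mpolyC evEZ rmorph1. Qed.

Lemma prod_one (s : seq 'I_n) (x : End n) i : uniq s ->
  \prod_(j <- s) (if j == i then x else 1) = if i \in s then x else 1.
Proof.
elim: s => [|j s IH] /=; first by rewrite big_nil.
move=> /andP [nj us]; rewrite big_cons IH // in_cons.
case: (eqVneq j i) => [ji|ne] /=; last by rewrite mul1r.
by subst j; rewrite (negbTE nj) mulr1.
Qed.

Lemma evE_Xi (i : 'I_n) : evE 'X_i = xE i.
Proof.
rewrite evEX /monoE (eq_bigr (fun j => if j == i then xE i else 1)); last first.
  move=> j _; rewrite mnm1E; case: (eqVneq j i) => [ji|ne]; first by subst j; rewrite expr1.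
  by rewrite expr0.
by rewrite prod_one ?index_enum_uniq // mem_index_enum.
Qed.

End Ev.

Local Open Scope ring_scope.

Section Ser.
Variable A : comRingType.
Implicit Types a b c : nat -> A.

Definition Pk k a : {poly A} := \poly_(i < k.+1) a i.

Lemma ser_mulE a b k : ser_mul a b k = (Pk k a * Pk k b)`_k.
Proof.
rewrite coefM /ser_mul; apply: eq_bigr => -[j /= lt] _.
by rewrite !coef_poly lt ltnS leq_subr.
Qed.

Lemma coefM_agree (p p' q : {poly A}) k :
  (forall j, (j <= k)%N -> p`_j = p'`_j) -> (p * q)`_k = (p' * q)`_k /\ (q * p)`_k = (q * p')`_k.
Proof.
move=> H; rewrite !coefM; split; apply: eq_bigr => -[j /= lt] _.
  by rewrite H //; lia.
by rewrite (H (k - j)%N) //; lia.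
Qed.

Lemma Pk_mul a b k j : (j <= k)%N -> (Pk k (ser_mul a b))`_j = (Pk k a * Pk k b)`_j.
Proof.
move=> le; rewrite coef_poly ltnS le coefM /ser_mul; apply: eq_bigr => -[i /= lt] _.
rewrite !coef_poly !ltnS.
have -> : (i <= k)%N by lia.
by have -> : (j - i <= k)%N by lia.
Qed.

Lemma ser_mulA a b c : ser_mul a (ser_mul b c) =1 ser_mul (ser_mul a b) c.
Proof.
move=> k; rewrite !ser_mulE.
have [-> _] := coefM_agree (Pk k c) (Pk_mul a b (k:=k)).
have [_ ->] := coefM_agree (Pk k a) (Pk_mul b c (k:=k)).
by rewrite mulrA.
Qed.

Lemma ser_mulC a b : ser_mul a b =1 ser_mul b a.
Proof. by move=> k; rewrite !ser_mulE mulrC. Qed.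

Lemma ser_mul1 a : ser_mul (@ser_one A) a =1 a.
Proof.
move=> k; rewrite /ser_mul big_ord_recl /= /ser_one /= mul1r subn0 big1 ?addr0 //.
by move=> i _; rewrite mul0r.
Qed.

Lemma ser_mulr1 a : ser_mul a (@ser_one A) =1 a.
Proof. by move=> k; rewrite ser_mulC ser_mul1. Qed.

Lemma ser_mulA' : associative (@ser_mul A).
Proof. by move=> a b c; apply: funext; apply: ser_mulA. Qed.
Lemma ser_mul1' : left_id (@ser_one A) (@ser_mul A).
Proof. by move=> a; apply: funext; apply: ser_mul1. Qed.
Lemma ser_mulr1' : right_id (@ser_one A) (@ser_mul A).
Proof. by move=> a; apply: funext; apply: ser_mulr1. Qed.
Lemma ser_mulC' : commutative (@ser_mul A).
Proof. by move=> a b; apply: funext; apply: ser_mulC. Qed.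

HB.instance Definition _ := Monoid.isLaw.Build (nat -> A) (@ser_one A) (@ser_mul A) ser_mulA' ser_mul1' ser_mulr1'.
HB.instance Definition _ := SemiGroup.isCommutativeLaw.Build (nat -> A) (@ser_mul A) ser_mulC'.

Lemma ser_lin_mul (u v : A) k : ser_mul (ser_lin u) (ser_lin v) k =
  if k == 0%N then 1 else if k == 1%N then u + v else if k == 2%N then u * v else 0.
Proof.
rewrite /ser_mul /ser_lin.
case: k => [|[|[|k]]] /=.
- by rewrite big_ord1 /= mulr1.
- by rewrite !big_ord_recl big_ord0 /= mul1r mulr1 addr0 addrC.
- by rewrite !big_ord_recl big_ord0 /= mul1r mul0r !addr0 add0r.
- rewrite big1 // => -[i /= lt] _.
  case: i lt => [|[|i]] lt /=; last by rewrite mul0r.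
    by rewrite mulr0.
  by rewrite mulr0.
Qed.

Lemma geom_lin (u : A) : ser_mul (ser_geom u) (ser_lin (- u)) =1 @ser_one A.
Proof.
move=> k; rewrite /ser_mul /ser_lin /ser_geom /ser_one.
case: k => [|k]; first by rewrite big_ord1 /= mulr1.
rewrite big_ord_recr /= subnn /= mulr1 big_ord_recr /=.
have -> : (k.+1 - k = 1)%N by lia.
rewrite /= big1 ?add0r; last first.
  move=> -[i /= lt] _.
  have -> : (k.+1 - i = (k - i.+1).+2)%N by lia.
  by rewrite /= mulr0.
by rewrite mulrN -exprSr addNr.
Qed.

Lemma G_lin (u : A) : ser_mul (ser_mul (ser_lin u) (ser_geom u)) (ser_lin (- u)) = ser_lin u.
Proof. by rewrite -ser_mulA' (funext (geom_lin u)) ser_mulr1'. Qed.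

Lemma ser_morph (B : comRingType) (f : {rmorphism A -> B}) a b :
  f \o ser_mul a b = ser_mul (f \o a) (f \o b).
Proof. by apply: funext => k; rewrite /= /ser_mul rmorph_sum; apply: eq_bigr => i _; rewrite rmorphM. Qed.

End Ser.

Local Open Scope ring_scope.

Section QPoly.
Variable K : fieldType.
Local Notation G n i := (ser_mul (ser_lin ('X_i : {mpoly K[n]})) (ser_geom 'X_i)).

Lemma q_poly0 r : q_poly K r 0 = (r == 0%N)%:R.
Proof. by rewrite /q_poly /gen_q big_ord0. Qed.

Definition Lm a b : {rmorphism {mpoly K[a]} -> {mpoly K[a + b]}} :=
  mmap (@mpolyC (a + b) K) (fun i => 'X_(lshift b i)).
Definition Rm a b : {rmorphism {mpoly K[b]} -> {mpoly K[a + b]}} :=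
  mmap (@mpolyC (a + b) K) (fun i => 'X_(rshift a i)).

Lemma Lm_X a b i : Lm a b 'X_i = 'X_(lshift b i).
Proof. by rewrite /Lm /= mmapX mmap1U. Qed.
Lemma Rm_X a b i : Rm a b 'X_i = 'X_(rshift a i).
Proof. by rewrite /Rm /= mmapX mmap1U. Qed.

Lemma map_lin (A B : comRingType) (f : {rmorphism A -> B}) (x : A) :
  f \o ser_lin x = ser_lin (f x).
Proof.
apply: funext => k /=; rewrite /ser_lin.
by case: (k == 0%N); [rewrite rmorph1|case: (k == 1%N); rewrite ?rmorph0].
Qed.

Lemma map_geom (A B : comRingType) (f : {rmorphism A -> B}) (x : A) :
  f \o ser_geom x = ser_geom (f x).
Proof. by apply: funext => k /=; rewrite /ser_geom rmorphXn. Qed.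

Lemma map_one (A B : comRingType) (f : {rmorphism A -> B}) :
  f \o @ser_one A = @ser_one B.
Proof. by apply: funext => k /=; rewrite /ser_one rmorph_nat. Qed.

Lemma map_big (A B : comRingType) (f : {rmorphism A -> B}) n (F : 'I_n -> nat -> A) :
  f \o \big[@ser_mul A/@ser_one A]_(i < n) F i = \big[@ser_mul B/@ser_one B]_(i < n) (f \o F i).
Proof.
apply: (big_morph (fun s => f \o s)); last exact: map_one.
by move=> x y; rewrite ser_morph.
Qed.

Lemma gen_q_split a b :
  gen_q K (a + b) = ser_mul (Lm a b \o gen_q K a) (Rm a b \o gen_q K b).
Proof.
rewrite /gen_q big_split_ord !map_big; congr ser_mul; apply: eq_bigr => i _.
  by rewrite ser_morph map_lin map_geom Lm_X.
by rewrite ser_morph map_lin map_geom Rm_X.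
Qed.

Lemma q_poly_split a b r :
  q_poly K r (a + b) = \sum_(j < r.+1) Lm a b (q_poly K j a) * Rm a b (q_poly K (r - j) b).
Proof. by rewrite /q_poly gen_q_split. Qed.

Local Notation x0 := ('X_(0 : 'I_2) : {mpoly K[2]}).
Local Notation x1 := ('X_(1 : 'I_2) : {mpoly K[2]}).
Local Notation Q := (gen_q K 2).

Lemma gen_q2 : Q = ser_mul (G 2 0) (G 2 1).
Proof. by rewrite /gen_q !big_ord_recl big_ord0 ser_mulr1'. Qed.

Lemma Q_rel : ser_mul (ser_mul (ser_lin (- x0)) (ser_lin (- x1))) Q =
  ser_mul (ser_lin x0) (ser_lin x1).
Proof.
rewrite gen_q2 [LHS]ser_mulC'.
rewrite -ser_mulA' [ser_mul (G 2 1) _]ser_mulA' [ser_mul (G 2 1) _]ser_mulC'.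
rewrite -ser_mulA' G_lin ser_mulA' G_lin //.
Qed.

Lemma Q_coef r : \sum_(j < r.+1) ser_mul (ser_lin (- x0)) (ser_lin (- x1)) j * Q (r - j)%N =
  ser_mul (ser_lin x0) (ser_lin x1) r.
Proof. by rewrite -Q_rel. Qed.

Lemma q2_0 : q_poly K 0 2 = 1.
Proof.
have := Q_coef 0; rewrite big_ord1 !ser_lin_mul /= mul1r => <-.
by rewrite /q_poly.
Qed.

Lemma q2_1 : q_poly K 1 2 = (x0 + x1) + (x0 + x1).
Proof.
have := Q_coef 1; rewrite !big_ord_recl big_ord0 !ser_lin_mul /= addr0 mul1r.
rewrite -/(q_poly K 1 2) -/(q_poly K 0 2) q2_0 mulr1 => H.
by apply/(addIr (- x0 - x1)); rewrite H; ring.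
Qed.

Lemma q2_2 : q_poly K 2 2 = (x0 + x1) * q_poly K 1 2.
Proof.
have := Q_coef 2; rewrite !big_ord_recl big_ord0 !ser_lin_mul /= addr0 mul1r.
have -> : (2 - 0 = 2)%N by []. have -> : (2 - bump 0 0 = 1)%N by [].
have -> : (2 - bump 0 (bump 0 0) = 0)%N by [].
rewrite -/(q_poly K 2 2) -/(q_poly K 1 2) -/(q_poly K 0 2) q2_0 => H.
by apply/(addIr ((- x0 - x1) * q_poly K 1 2 + - x0 * - x1 * 1)); rewrite H; ring.
Qed.

Lemma q2_rec r : q_poly K r.+3 2 = (x0 + x1) * q_poly K r.+2 2 - (x0 * x1) * q_poly K r.+1 2.
Proof.
have := Q_coef r.+3; rewrite !big_ord_recl big1; last first.
  by move=> j _; rewrite ser_lin_mul /= mul0r.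
rewrite !ser_lin_mul /=.
have -> : (r.+3 - 0 = r.+3)%N by []. have -> : (r.+3 - bump 0 0 = r.+2)%N by [].
have -> : (r.+3 - bump 0 (bump 0 0) = r.+1)%N by [].
rewrite -/(q_poly K r.+3 2) -/(q_poly K r.+2 2) -/(q_poly K r.+1 2) => H.
by apply/(addIr ((- x0 - x1) * q_poly K r.+2 2 + - x0 * - x1 * q_poly K r.+1 2)); rewrite -[RHS]addr0; rewrite -{1}H; ring.
Qed.

End QPoly.

Local Open Scope ring_scope.

Lemma zid (V : zmodType) (a b d x : V) : a + (x - b) + (d - x) = a - b + d.
Proof. rewrite -!addrA; congr (_ + _); rewrite addrCA; congr (_ + _); by rewrite addrCA subrr addr0. Qed.
Lemma zid2 (V : zmodType) (a b c o : V) : b + (o - c) + (a + (c - o)) = a + b.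
Proof. by rewrite addrACA [(o - c) + _]addrA subrK subrr addr0 addrC. Qed.

Section Two.
Variables (K : fieldType) (t : bool).
Local Notation End := (End K t).
Local Notation x1 := (xE K t (0 : 'I_2)).
Local Notation x2 := (xE K t (1 : 'I_2)).
Local Notation tau := (tauH K t : End 2).
Local Notation cap := (capH K t).
Local Notation cup := (cupH K t).
Local Notation C := (compH cup cap : End 2).

Lemma sval_x1 : sval x1 = mtens (mx K t) (mid K t 1).
Proof. by rewrite /= cl_xi /xiM tens0m. Qed.
Lemma sval_x2 : sval x2 = mtens (mid K t 1) (mx K t).
Proof. by rewrite /= cl_xi /xiM tensm0. Qed.

Lemma R1 : x1 * tau - tau * x2 = 1 - C.
Proof.
apply: hom_inj; have := dot_slide K t; rewrite tens_id -sval_x1 -sval_x2; exact.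
Qed.

Lemma R2 : x2 * tau - tau * x1 = C - 1.
Proof.
apply: hom_inj; have := dot_slide2 K t; rewrite -sval_x1 -sval_x2; exact.
Qed.

Lemma capx : compH cap x2 = - compH cap x1.
Proof.
apply: hom_inj; have := cap_dot K t; rewrite -sval_x1 -sval_x2; exact.
Qed.

Lemma cupx : compH x1 cup = - compH x2 cup.
Proof.
apply: hom_inj; have := cup_dot K t; rewrite -sval_x1 -sval_x2; exact.
Qed.

Lemma x12 : x1 * x2 = x2 * x1.
Proof. exact: xE_comm. Qed.

Lemma H1 : x1 * tau = tau * x2 + (1 - C).
Proof. by rewrite -R1 [_ + (_ - _)]addrC subrK. Qed.
Lemma H2 : x2 * tau = tau * x1 + (C - 1).
Proof. by rewrite -R2 [_ + (_ - _)]addrC subrK. Qed.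

Local Notation e1 := (x1 + x2).
Local Notation e2 := (x1 * x2).

Lemma e1_tau : e1 * tau = tau * e1.
Proof.
by rewrite mulrDl H1 H2 mulrDr zid2.
Qed.

Lemma cap_e1 : compH cap e1 = 0.
Proof. by rewrite compHDr capx addrN. Qed.

Lemma e1_cup : compH e1 cup = 0.
Proof. by rewrite compHDl cupx addNr. Qed.

Lemma e2_tau : e2 * tau = tau * e2 - C * x1 + x1 * C.
Proof.
rewrite -mulrA H2 mulrDr mulrA H1 mulrDl -mulrA -x12 mulrBr mulrBl mul1r mulr1.
by rewrite zid.
Qed.

Definition W (M : End 2) := [/\ M * tau = tau * M, compH cap M = 0 & compH M cup = 0].

Lemma W_e1 : W e1.
Proof. by split; [exact: e1_tau|exact: cap_e1|exact: e1_cup]. Qed.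

Lemma W_add M N : W M -> W N -> W (M + N).
Proof.
move=> [h1 h2 h3] [k1 k2 k3]; split.
- by rewrite mulrDl mulrDr h1 k1.
- by rewrite compHDr h2 k2 addr0.
- by rewrite compHDl h3 k3 addr0.
Qed.

Lemma W_opp M : W M -> W (- M).
Proof.
move=> [h1 h2 h3]; split.
- by rewrite mulNr mulrN h1.
- by rewrite compHNr h2 oppr0.
- by rewrite compHNl h3 oppr0.
Qed.

Lemma W_mul_e1 M : W M -> W (e1 * M).
Proof.
move=> [h1 h2 h3]; split.
- by rewrite -mulrA h1 !mulrA e1_tau.
- by rewrite mulE compHA cap_e1 compH0l.
- by rewrite mulE -compHA h3 compH0r.
Qed.

Lemma W_mul_e2 M : GRing.comm M x1 -> GRing.comm M x2 -> W M -> W (e2 * M).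
Proof.
move=> c1 c2 [h1 h2 h3]; split.
- rewrite -mulrA h1 !mulrA e2_tau mulrDl mulrBl.
  have -> : C * x1 * M = 0 by rewrite -mulrA -c1 mulrA !mulE -[compH C M]compHA h2 compH0r compH0l.
  have -> : x1 * C * M = 0 by rewrite -mulrA !mulE -[compH C M]compHA h2 compH0r compH0r.
  by rewrite subr0 addr0 !mulrA.
- have cM : GRing.comm M e2 by apply: commrM.
  by rewrite -cM mulE compHA h2 compH0l.
- by rewrite mulE -compHA h3 compH0r.
Qed.

End Two.

Local Open Scope ring_scope.

Section Main.
Variables (K : fieldType) (t : bool).
Local Notation End := (End K t).
Local Notation evE := (@evE K t _).
Local Notation x1 := (xE K t (0 : 'I_2)).
Local Notation x2 := (xE K t (1 : 'I_2)).
Local Notation X0 := ('X_(0 : 'I_2) : {mpoly K[2]}).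
Local Notation X1 := ('X_(1 : 'I_2) : {mpoly K[2]}).

Lemma ev_e1 : evE (X0 + X1) = x1 + x2.
Proof. by rewrite rmorphD /= !evE_Xi. Qed.
Lemma ev_e2 : evE (X0 * X1) = x1 * x2.
Proof. by rewrite rmorphM /= !evE_Xi. Qed.

Lemma commx1 (p : {mpoly K[2]}) : GRing.comm (evE p) x1.
Proof. by rewrite -evE_Xi; apply: evE_comm. Qed.
Lemma commx2 (p : {mpoly K[2]}) : GRing.comm (evE p) x2.
Proof. by rewrite -evE_Xi; apply: evE_comm. Qed.

Lemma W_q r : W (evE (q_poly K r.+1 2)).
Proof.
suff : W (evE (q_poly K r.+1 2)) /\ W (evE (q_poly K r.+2 2)) by case.
elim: r => [|r [IH1 IH2]].
  have h1 : W (evE (q_poly K 1 2)) by rewrite q2_1 rmorphD /= ev_e1; apply: W_add; apply: W_e1.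
  split=> //; rewrite q2_2 rmorphM /= ev_e1; exact: W_mul_e1.
split=> //; rewrite q2_rec rmorphB !rmorphM !rmorphD /= !evE_Xi.
apply: W_add; first exact: W_mul_e1.
by apply: W_opp; apply: W_mul_e2 => //; [apply: commx1|apply: commx2].
Qed.

Lemma xE_lshift a b (i : 'I_a) : xE K t (lshift b i) = tensL b (xE K t i).
Proof. by apply: hom_inj; rewrite /= !cl_xi /= xiM_lsplit. Qed.
Lemma xE_rshift a b (j : 'I_b) : xE K t (rshift a j) = tensR a (xE K t j).
Proof. by apply: hom_inj; rewrite /= !cl_xi /= xiM_rsplit. Qed.

Lemma evE_Lm a b p : evE (Lm K a b p) = tensL b (evE p).
Proof.
rewrite /Lm /= /mmap rmorph_sum /evE raddf_sum; apply: eq_bigr => m _.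
rewrite rmorphM /= evEC scalemulE mul1r tensLZ /monoE /mmap1 !rmorph_prod /=; congr (_ *: _).
by apply: eq_bigr => i _; rewrite !rmorphXn /= evE_Xi xE_lshift.
Qed.

Lemma evE_Rm a b p : evE (Rm K a b p) = tensR a (evE p).
Proof.
rewrite /Rm /= /mmap rmorph_sum /evE raddf_sum; apply: eq_bigr => m _.
rewrite rmorphM /= evEC scalemulE mul1r tensRZ /monoE /mmap1 !rmorph_prod /=; congr (_ *: _).
by apply: eq_bigr => i _; rewrite !rmorphXn /= evE_Xi xE_rshift.
Qed.

Lemma decomp a b r : evE (q_poly K r (a + b)) =
  \sum_(j < r.+1) tensH (evE (q_poly K j a)) (evE (q_poly K (r - j) b)).
Proof.
rewrite q_poly_split rmorph_sum; apply: eq_bigr => j _.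
by rewrite rmorphM /= evE_Lm evE_Rm tensLR.
Qed.

End Main.

Local Open Scope ring_scope.

Section Final.
Variables (K : fieldType) (t : bool).
Local Notation End := (End K t).
Local Notation evE := (@evE K t _).

Definition QE r n : End n := evE (q_poly K r n).

Lemma QE0 r : QE r 0 = (r == 0%N)%:R.
Proof. by rewrite /QE q_poly0 rmorph_nat. Qed.

Lemma main f n m : wt f n m -> forall r,
  mcomp (sval (QE r m)) (cl t f) = mcomp (cl t f) (sval (QE r n)).
Proof.
elim=> {f n m}.
- move=> k r; rewrite -/(mid K t k) (compm1 (svalP (QE r k))).
  by rewrite (comp1m (svalP (QE r k))).
- move=> r; have -> : cl t (Gx K) = sval (evE ('X_(0 : 'I_1) : {mpoly K[1]})).
    by rewrite evE_Xi /= cl_xi /xiM tens0m /= tensm0.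
  by have := evE_comm t (q_poly K r 1) 'X_(0 : 'I_1) => /(congr1 sval).
- move=> r; case: r => [|r].
    by rewrite /QE q2_0 rmorph1 /= -/(mtau K t) (compm1 (ty_tau K t)) (comp1m (ty_tau K t)).
  by have [h _ _] := W_q K t r; have := congr1 sval h.
- move=> r; case: r => [|r].
    rewrite /QE; have -> : q_poly K 0 0 = 1 by rewrite q_poly0.
    by rewrite q2_0 !rmorph1 /= -/(mcap K t) (compm1 (ty_cap K t)) (comp1m (ty_cap K t)).
  rewrite QE0.
  have [_ h _] := W_q K t r; have := congr1 sval h; rewrite /= => ->.
  by have := congr1 sval (@compH0l K t 2 0 0 (capH K t)).
- move=> r; case: r => [|r].
    rewrite /QE; have -> : q_poly K 0 0 = 1 by rewrite q_poly0.
    by rewrite q2_0 !rmorph1 /= -/(mcup K t) (compm1 (ty_cup K t)) (comp1m (ty_cup K t)).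
  rewrite QE0.
  have [_ _ h] := W_q K t r; have := congr1 sval h; rewrite /= => ->.
  by have := congr1 sval (@compH0r K t 0 0 2 (cupH K t)).
- move=> f g n m p _ IHg _ IHf r.
  by rewrite clComp compA IHf -compA IHg compA.
- move=> f g n1 m1 n2 m2 n m Hf IHf Hg IHg -> -> r.
  pose FH := exist (fun a => ty a n1 m1) (cl t f) ((ty_cl t f n1 m1).2 Hf).
  pose GH := exist (fun a => ty a n2 m2) (cl t g) ((ty_cl t g n2 m2).2 Hg).
  have IHF j : compH (QE j m1) FH = compH FH (QE j n1) by apply: hom_inj; exact: IHf.
  have IHG j : compH (QE j m2) GH = compH GH (QE j n2) by apply: hom_inj; exact: IHg.
  suff E : compH (QE r (m1 + m2)) (tensH FH GH) = compH (tensH FH GH) (QE r (n1 + n2)).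
    by rewrite clTens; exact: (congr1 sval E).
  rewrite /QE !decomp compH_suml compH_sumr; apply: eq_bigr => j _.
  by rewrite !interchangeH -/(QE _ _) IHF IHG.
- move=> k l r; rewrite -/(mzero K t k l).
  have := congr1 sval (@compH0r K t k l l (QE r l)).
  have := congr1 sval (@compH0l K t k k l (QE r k)).
  by move=> /= -> ->.
- move=> f g n m _ IHf _ IHg r.
  by rewrite clAdd compDr compDl IHf IHg.
- move=> c f n m _ IHf r.
  by rewrite clScal compZr compZl IHf.
Qed.

End Final.

Unset Implicit Arguments.

Theorem theorem3p8 (K : fieldType) (char_ne2 : (2%:R : K) != 0) (t : bool)
  (r n m : nat) (f : nbtm K) :
  wt f n m ->
  nb_eq t n m (Comp (poly_tm (q_poly K r m)) f) (Comp f (poly_tm (q_poly K r n))).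
Proof.
move=> W.
have Wc : wt (Comp (poly_tm (q_poly K r m)) f) n m.
  by apply: wt_comp; [exact: W|exact: wt_poly].
apply: Req_eq Wc.
apply/(cl_eq t); rewrite !clComp !link_poly.
exact: (@main K t _ _ _ W r).
Qed.
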